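(* Let $\Gamma$ and $\Gamma'$ be triangulations of connected closed $2$-dimensional surfaces $M$ and $M'$, and let $\tau,\tau'$ be $z$-orientations of $\Gamma,\Gamma'$ respectively such that all faces of $(\Gamma,\tau)$ and of $(\Gamma',\tau')$ are of type II. Then for any face $F$ of $\Gamma$, any face $F'$ of $\Gamma'$ and every special homeomorphism $g:\partial F\to\partial F'$, there exists a $z$-orientation of the connected sum $\Gamma\#_g\Gamma'$ for which all faces are of type II.
   Context: A triangulation of a connected closed surface (not necessarily orientable) is a closed $2$-cell embedding of a connected finite simple graph all of whose faces are triangles. Two edges are adjacent if distinct and in a common face; two faces are adjacent if distinct and their intersection is an edge. A zigzag is a sequence of edges $(e_i)_{i\in\mathbb{N}}$ such that for every $i$: $e_i,e_{i+1}$ are adjacent, the faces containing $e_i,e_{i+1}$ and $e_{i+1},e_{i+2}$ are adjacent, and $e_i,e_{i+2}$ are disjoint; it is a cyclic sequence, equivalently a cyclic vertex sequence $v_1,\dots,v_n$ with $e_i=v_iv_{i+1}$, traversing $e_i$ from $v_i$ to $v_{i+1}$. A $z$-orientation $\tau$ is a set of zigzags containing exactly one of $Z,Z^{-1}$ (reversed zigzag) for every zigzag $Z$. Every edge is traversed exactly twice in total by zigzags of $\tau$; it is of type I if in opposite directions, of type II if in the same direction. A face is of type II if all three of its edges are of type II (they then form a directed cycle); otherwise (two type I edges and one type II edge) it is of type I. A homeomorphism $g:\partial F\to\partial F'$ between boundaries of faces is special if it maps vertices to vertices. The connected sum $\Gamma\#_g\Gamma'$ is the triangulation of $M\# M'$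 obtained by removing the interiors of $F$ and $F'$ and gluing $\partial F$ to $\partial F'$ via $g$. *)

(* Defs.v *)
From mathcomp Require Import all_boot.
Set Implicit Arguments. Unset Strict Implicit. Unset Printing Implicit Defensive.

Section Triang.
Variable V : finType.

(* A triangulation is given by its set of faces T; each face is the set of its
   three vertices.  Vertices of the triangulation are those lying on a face. *)
Definition vert (T : {set {set V}}) (v : V) := [exists f in T, v \in f].

Definition is_edge (T : {set {set V}}) (e : {set V}) :=
  (#|e| == 2) && [exists f in T, e \subset f].

Definition gadj (T : {set {set V}}) (u w : V) :=
  (u != w) && [exists f in T, (u \in f) && (w \in f)].

Definition link_adj (T : {set {set V}}) (v : V) (f g : {set V}) :=
  [&& f \in T, g \in T, v \in f, v \in g, f != g & #|f :&: g| == 2].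

Definition triangulation (T : {set {set V}}) : Prop :=
  [/\ T != set0,
      forall f, f \in T -> #|f| = 3,
      forall e, is_edge T e -> #|[set f in T | e \subset f]| = 2,
      forall v f g, f \in T -> g \in T -> v \in f -> v \in g ->
        connect (link_adj T v) f g
    & forall u w, vert T u -> vert T w -> connect (gadj T) u w].

Definition cyc (x : V) (s : seq V) (k : nat) := nth x s (k %% size s).

Definition zz_local (T : {set {set V}}) (x : V) (s : seq V) (i : nat) :=
  let e k := [set cyc x s k; cyc x s k.+1] in
  let fc k := e k :|: e k.+1 in
  [&& is_edge T (e i), is_edge T (e i.+1), e i != e i.+1,
      [exists f in T, fc i \subset f],
      fc i != fc i.+1, is_edge T (fc i :&: fc i.+1)
    & [disjoint e i & e i.+2]].

(* a zigzag, as a cyclic vertex sequence (listed over one minimal period) *)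
Definition is_zigzag (T : {set {set V}}) (s : seq V) : bool :=
  match s with
  | [::] => false
  | x :: _ => [forall i : 'I_(size s), zz_local T x s i] &&
              [forall k : 'I_(size s), (0 < k) ==> (rot k s != s)]
  end.

Definition ceq (s t : seq V) := has (fun k => rot k s == t) (iota 0 (size s)).

(* a z-orientation: a set (duplicate-free list, up to rotation) of zigzags
   containing exactly one of Z, Z^{-1} for every zigzag Z *)
Definition z_orientation (T : {set {set V}}) (tau : seq (seq V)) : Prop :=
  [/\ all (is_zigzag T) tau,
      forall i j, i < size tau -> j < size tau -> i != j ->
        ~~ ceq (nth [::] tau i) (nth [::] tau j)
    & forall s, is_zigzag T s -> (has (ceq s) tau) (+) (has (ceq (rev s)) tau)].

Definition trav (tau : seq (seq V)) (u v : V) : nat :=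
  \sum_(t <- tau) count (pred1 (u, v)) (zip t (rot 1 t)).

Definition edge_typeII (tau : seq (seq V)) (u v : V) :=
  ((trav tau u v == 2) && (trav tau v u == 0)) ||
  ((trav tau u v == 0) && (trav tau v u == 2)).

Definition face_typeII (tau : seq (seq V)) (f : {set V}) : Prop :=
  forall u v, u \in f -> v \in f -> u != v -> edge_typeII tau u v.

Definition all_faces_typeII (T : {set {set V}}) (tau : seq (seq V)) : Prop :=
  forall f, f \in T -> face_typeII tau f.

End Triang.

(* connected sum: remove faces F, F', glue dF to dF' via the vertex bijection g.
   Vertex type V + V'; the vertices of F are replaced by their g-images. *)
Definition csum_vtx (V V' : finType) (F : {set V}) (g : V -> V') (v : V) : V + V' :=
  if v \in F then inr (g v) else inl v.

Definition csum (V V' : finType) (T : {set {set V}}) (T' : {set {set V'}})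
  (F : {set V}) (F' : {set V'}) (g : V -> V') : {set {set (V + V')}} :=
  [set (csum_vtx F g) @: f | f : {set V} in T :\ F] :|: [set (@inr V V') @: f | f : {set V'} in T' :\ F'].

(* Main.v *)
Require Import Defs.
From mathcomp Require Import all_boot.
From mathcomp Require Import zify.
Set Implicit Arguments. Unset Strict Implicit. Unset Printing Implicit Defensive.

Section Sets.
Variable W : finType.
Implicit Types a b c x y z : W.

Lemma in3 x a b c : (x \in [set a; b; c]) = [|| x == a, x == b | x == c].
Proof. by rewrite !inE orbA. Qed.

Lemma set3A a b c : [set a; b; c] = [set b; a; c].
Proof. by apply/setP=> x; rewrite !in3; case: (x == a); case: (x == b). Qed.

Lemma set3B a b c : [set a; b; c] = [set a; c; b].
Proof. by apply/setP=> x; rewrite !in3; case: (x == b); case: (x == c); rewrite ?orbT. Qed.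

Lemma set3C a b c : [set a; b; c] = [set b; c; a].
Proof. by rewrite set3A set3B. Qed.

Lemma set3R a b c : [set a; b; c] = [set c; b; a].
Proof. by rewrite set3C set3A. Qed.

Lemma card3 a b c : a != b -> b != c -> a != c -> #|[set a; b; c]| = 3.
Proof.
move=> ab bc ac.
have -> : [set a; b; c] = c |: [set a; b].
  by apply/setP=> x; rewrite !inE; case: (x == c); rewrite ?orbT ?orbF.
rewrite cardsU1 cards2 ab !inE.
by rewrite negb_or (eq_sym c a) ac (eq_sym c b) bc.
Qed.

Lemma card3_le a b c : #|[set a; b; c]| <= 3.
Proof.
have -> : [set a; b; c] = c |: [set a; b].
  by apply/setP=> x; rewrite !inE; case: (x == c); rewrite ?orbT ?orbF.
rewrite cardsU1 cards2; case: (_ \notin _); case: (a != b) => //.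
Qed.

Lemma card3_neq a b c : #|[set a; b; c]| = 3 -> [/\ a != b, b != c & a != c].
Proof.
move=> H.
have H1 : a != b.
  apply/eqP=> E; subst b; move: H.
  have -> : [set a; a; c] = [set a; c] by apply/setP=> x; rewrite !inE orbb.
  by rewrite cards2; case: (a != c).
have H2 : b != c.
  apply/eqP=> E; subst c; move: H.
  have -> : [set a; b; b] = [set a; b] by apply/setP=> x; rewrite !inE -orbA orbb.
  by rewrite cards2; case: (a != b).
split=> //; apply/eqP=> E; subst c; move: H.
have -> : [set a; b; a] = [set a; b].
  by apply/setP=> x; rewrite !inE; case: (x == a); case: (x == b).
by rewrite cards2; case: (a != b).
Qed.

Lemma face3 (f : {set W}) a b c : #|f| = 3 -> a \in f -> b \in f -> c \in f ->
  a != b -> b != c -> a != c -> f = [set a; b; c].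
Proof.
move=> Hf af bf cf ab bc ac; apply/eqP; rewrite eq_sym eqEcard card3 // Hf leqnn andbT.
by apply/subsetP=> x; rewrite in3 => /or3P [] /eqP ->.
Qed.

Lemma third (f : {set W}) a b : #|f| = 3 -> a \in f -> b \in f -> a != b ->
  exists c, [/\ c \in f, c != a, c != b & f = [set a; b; c]].
Proof.
move=> Hf af bf ab.
have : 0 < #|f :\: [set a; b]|.
  rewrite cardsD Hf.
  have -> : f :&: [set a; b] = [set a; b].
    by apply/setIidPr/subsetP=> x /set2P [] ->.
  by rewrite cards2 ab.
case/card_gt0P=> c /setDP [cf]; rewrite !inE negb_or => /andP [ca cb].
exists c; split=> //; apply: face3 => //; by rewrite eq_sym.
Qed.

End Sets.

Section Cyc.
Variable W : finType.
Implicit Types (x y : W) (s t : seq W).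

Lemma cyc_mod x s a b : a %% size s = b %% size s -> cyc x s a = cyc x s b.
Proof. by rewrite /cyc => ->. Qed.

Lemma cyc_def x y s k : 0 < size s -> cyc x s k = cyc y s k.
Proof. by move=> H; rewrite /cyc; apply: set_nth_default; rewrite ltn_pmod. Qed.

Lemma cyc_small x s k : k < size s -> cyc x s k = nth x s k.
Proof. by move=> H; rewrite /cyc modn_small. Qed.

Lemma mod2 m n : n <= m -> m < n + n -> m %% n = m - n.
Proof.
move=> H1 H2; have -> : m = (m - n) + n by rewrite subnK.
rewrite modnDr modn_small; lia.
Qed.

Lemma cyc_rot x s k i : k <= size s -> cyc x (rot k s) i = cyc x s (i + k).
Proof.
move=> Hk; case: (posnP (size s)) => [/size0nil -> |npos]; first by rewrite rot_oversize // /cyc !nth_nil.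
rewrite /cyc size_rot; set n := size s in Hk npos *.
rewrite -modnDml; set j := i %% n.
have jn : j < n by rewrite /j ltn_pmod.
rewrite /rot nth_cat size_drop -/n; clearbody j n.
case: ifP => H.
  by rewrite nth_drop modn_small; [rewrite addnC | lia].
move/negbT: H; rewrite -leqNgt => H.
rewrite nth_take; last by lia.
by rewrite mod2; [congr nth; lia | lia | lia].
Qed.

Lemma cyc_pair x t j : 0 < size t -> (cyc x t j, cyc x t j.+1) \in zip t (rot 1 t).
Proof.
move=> H; set n := size t.
have jn : j %% n < n by rewrite ltn_pmod.
have E : (cyc x t j, cyc x t j.+1) = nth (x, x) (zip t (rot 1 t)) (j %% n).
  rewrite nth_zip ?size_rot //; congr (_, _).
  rewrite -cyc_small ?size_rot // cyc_rot //.
  by apply: cyc_mod; rewrite modnDml addn1.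
rewrite E; apply: mem_nth; rewrite size_zip size_rot minnn //.
Qed.

End Cyc.


Section Zig.
Variable W : finType.
Variable T : {set {set W}}.
Hypothesis H3 : forall f, f \in T -> #|f| = 3.
Hypothesis H2 : forall e, is_edge T e -> #|[set f in T | e \subset f]| = 2.

Definition st := (W * W * W)%type.
Definition valid (s : st) := let: (x, y, z) := s in
  [&& [set x; y; z] \in T, x != y, y != z & x != z].
Definition isw (x y z w : W) := [&& [set y; z; w] \in T, w != x, w != y & w != z].
Definition rv (s : st) : st := let: (x, y, z) := s in (z, y, x).

Lemma valid_rot x y z : valid (x, y, z) -> valid (y, z, x).
Proof.
case/and4P=> H xy yz xz; apply/and4P; split=> //; first by rewrite -set3C.
by rewrite eq_sym. by rewrite eq_sym.
Qed.

Lemma valid_rv s : valid s -> valid (rv s).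
Proof.
case: s => [[x y] z] /and4P [H xy yz xz]; apply/and4P; split; rewrite 1?eq_sym //.
by rewrite -set3R.
Qed.

Lemma edge_of x y z : valid (x, y, z) -> is_edge T [set y; z].
Proof.
case/and4P=> H xy yz xz; rewrite /is_edge cards2 yz /=.
apply/existsP; exists [set x; y; z]; rewrite H /=.
by apply/subsetP=> u; rewrite !inE => /orP [] ->; rewrite ?orbT.
Qed.

Lemma isw_ex x y z : valid (x, y, z) -> exists w, isw x y z w.
Proof.
move=> V; have E := H2 (edge_of V).
case/and4P: V=> H xy yz xz.
set S := [set f in T | [set y; z] \subset f] in E.
have XS : [set x; y; z] \in S.
  rewrite inE H /=; apply/subsetP=> u; rewrite !inE => /orP [] ->; by rewrite ?orbT.
have : 0 < #|S :\ [set x; y; z]| by move: E; rewrite (cardsD1 [set x; y; z]) XS add1n => -[->].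
case/card_gt0P=> f /setD1P [fX]; rewrite inE => /andP [fT sf].
have yf : y \in f by apply: (subsetP sf); rewrite !inE eqxx.
have zf : z \in f by apply: (subsetP sf); rewrite !inE eqxx orbT.
have [w [wf wy wz Ef]] := third (H3 fT) yf zf yz.
exists w; apply/and4P; split=> //; first by rewrite -Ef.
apply/eqP=> wx; subst w; move/eqP: fX; apply; rewrite Ef.
by rewrite -set3C.
Qed.

Lemma isw_uniq x y z w1 w2 : valid (x, y, z) -> isw x y z w1 -> isw x y z w2 -> w1 = w2.
Proof.
move=> V; have E := H2 (edge_of V).
case/and4P: V=> H xy yz xz.
case/and4P=> H1 w1x w1y w1z; case/and4P=> H4 w2x w2y w2z.
set S := [set f in T | [set y; z] \subset f] in E.
have sub3 : forall w, [set y; z] \subset [set y; z; w].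
  by move=> w; apply/subsetP=> u; rewrite !inE => /orP [] ->; rewrite ?orbT.
have XS : [set x; y; z] \in S.
  rewrite inE H /=; apply/subsetP=> u; rewrite !inE => /orP [] ->; by rewrite ?orbT.
have F1 : [set y; z; w1] \in S by rewrite inE H1 sub3.
have F2 : [set y; z; w2] \in S by rewrite inE H4 sub3.
have N1 : [set y; z; w1] != [set x; y; z].
  apply/eqP=> E1; have : w1 \in [set x; y; z] by rewrite -E1 !inE eqxx orbT.
  by rewrite in3 (negbTE w1x) (negbTE w1y) (negbTE w1z).
have N2 : [set y; z; w2] != [set x; y; z].
  apply/eqP=> E1; have : w2 \in [set x; y; z] by rewrite -E1 !inE eqxx orbT.
  by rewrite in3 (negbTE w2x) (negbTE w2y) (negbTE w2z).
have E12 : [set y; z; w1] = [set y; z; w2].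
  apply/eqP; apply: contraT => N12.
  have : #|[set [set x; y; z]; [set y; z; w1]; [set y; z; w2]]| <= #|S|.
    apply: subset_leq_card; apply/subsetP=> u; rewrite in3 => /or3P [] /eqP ->; by [].
  by rewrite E card3 // eq_sym.
have : w1 \in [set y; z; w2] by rewrite -E12 !inE eqxx orbT.
by rewrite in3 (negbTE w1y) (negbTE w1z) /= => /eqP.
Qed.

Definition nw x y z := odflt x [pick w | isw x y z w].

Lemma nwP x y z : valid (x, y, z) -> isw x y z (nw x y z).
Proof.
move=> V; rewrite /nw; case: pickP => [w //|N].
by have [w Hw] := isw_ex V; move: (N w); rewrite Hw.
Qed.

Lemma nw_eq x y z w : valid (x, y, z) -> isw x y z w -> nw x y z = w.
Proof. by move=> V Hw; apply: isw_uniq V (nwP V) Hw. Qed.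

Definition next (s : st) : st := let: (x, y, z) := s in
  if valid (x, y, z) then (y, z, nw x y z) else (x, y, z).

Arguments next : simpl never.
Lemma rvE x y z : rv (x, y, z) = (z, y, x). Proof. by []. Qed.

Lemma next_val x y z : valid (x, y, z) -> next (x, y, z) = (y, z, nw x y z).
Proof. by rewrite /next => ->. Qed.
Lemma next_nval x y z : ~~ valid (x, y, z) -> next (x, y, z) = (x, y, z).
Proof. by rewrite /next => /negbTE ->. Qed.

Lemma valid_next s : valid s -> valid (next s).
Proof.
case: s => [[x y] z] V; rewrite next_val //.
case/and4P: (nwP V) => H w1 w2 w3; case/and4P: V => _ xy yz xz.
by apply/and4P; split=> //; rewrite eq_sym.
Qed.

Lemma next_rv s : valid s -> next (rv (next s)) = rv s.
Proof.
case: s => [[x y] z] V; rewrite next_val // rvE.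
have V' := valid_rv (valid_next V); rewrite next_val // rvE in V'; rewrite next_val // rvE.
congr (_, _, _); apply: nw_eq => //.
case/and4P: (nwP V) => _ w1 _ _; case/and4P: V => H xy yz xz.
by rewrite /isw -set3R H eq_sym w1 xz xy.
Qed.

Lemma next_inj : injective next.
Proof.
move=> s1 s2 E.
case V1: (valid s1); case V2: (valid s2).
- have rvK : cancel rv rv by case=> [[]].
  by apply: (can_inj rvK); rewrite -(next_rv V1) -(next_rv V2) E.
- have : valid (next s1) by apply: valid_next.
  by rewrite E; case: s2 V2 {E} => [[x y] z] V2; rewrite next_nval ?V2.
- have : valid (next s2) by apply: valid_next.
  by rewrite -E; case: s1 V1 {E} => [[x y] z] V1; rewrite next_nval ?V1.
- move: E; case: s1 V1 => [[x y] z] V1; case: s2 V2 => [[x' y'] z'] V2.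
  by rewrite !next_nval ?V1 ?V2.
Qed.

Lemma next_fst s : valid s -> (next s).1.1 = s.1.2 /\ (next s).1.2 = s.2.
Proof. by case: s => [[x y] z] V; rewrite next_val. Qed.

Lemma valid_iter k s : valid s -> valid (iter k next s).
Proof. by move=> V; elim: k => //= k IH; apply: valid_next. Qed.

Definition vs (r : st) : seq W := map (fun s : st => s.1.1) (orbit next r).
Definition stt (x : W) (u : seq W) k : st := (cyc x u k, cyc x u k.+1, cyc x u k.+2).

Lemma size_vs r : size (vs r) = order next r.
Proof. by rewrite size_map size_orbit. Qed.

Lemma iter_mul r q : iter (q * order next r) next r = r.
Proof.
elim: q => [|q IH] //; rewrite mulSn iterD IH.
exact: (iter_order next_inj).
Qed.

Lemma iter_mod r k : iter k next r = iter (k %% order next r) next r.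
Proof. by rewrite {1}(divn_eq k (order next r)) addnC iterD iter_mul. Qed.

Lemma cyc_vs x r k : cyc x (vs r) k = (iter k next r).1.1.
Proof.
have H0 := order_gt0 next r.
rewrite /cyc size_vs (iter_mod r k) (nth_map r) ?size_orbit ?ltn_pmod //.
by rewrite /orbit nth_traject // ltn_pmod.
Qed.

Lemma stt_vs x r k : valid r -> stt x (vs r) k = iter k next r.
Proof.
move=> V; rewrite /stt !cyc_vs !iterS.
have Vk := valid_iter k V.
case: (next_fst Vk) => [E1 E2]; case: (next_fst (valid_next Vk)) => [E3 _].
by rewrite E3 E1 E2; case: (iter k next r) => [[]].
Qed.

Lemma stt_rot x u k : k <= size u -> stt x (rot k u) 0 = stt x u k.
Proof. by move=> H; rewrite /stt !cyc_rot // add0n !addSn. Qed.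

Definition zzc a b c d := [&& is_edge T [set a; b], is_edge T [set b; c], [set a; b] != [set b; c],
  [exists f in T, [set a; b] :|: [set b; c] \subset f],
  [set a; b] :|: [set b; c] != [set b; c] :|: [set c; d],
  is_edge T (([set a; b] :|: [set b; c]) :&: ([set b; c] :|: [set c; d]))
  & [disjoint [set a; b] & [set c; d]]].

Lemma zz_localE x s i : zz_local T x s i = zzc (cyc x s i) (cyc x s i.+1) (cyc x s i.+2) (cyc x s i.+3).
Proof. by []. Qed.

Lemma edge_neq (a b : W) : is_edge T [set a; b] -> a != b.
Proof. by case/andP; rewrite cards2; case: (a != b). Qed.

Lemma union3 (a b c : W) : [set a; b] :|: [set b; c] = [set a; b; c].
Proof. by apply/setP=> u; rewrite !inE; case: (u == a); case: (u == b); case: (u == c). Qed.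

Lemma zzc_of a b c : valid (a, b, c) -> zzc a b c (nw a b c).
Proof.
move=> V; have := nwP V; set d := nw a b c.
case/and4P=> Hd da db dc; case/and4P: V => H ab bc ac.
have E1 : is_edge T [set a; b].
  rewrite /is_edge cards2 ab /=; apply/existsP; exists [set a; b; c]; rewrite H /=.
  by apply/subsetP=> u; rewrite !inE => /orP [] ->; rewrite ?orbT.
have E2 : is_edge T [set b; c] by apply: (@edge_of a); apply/and4P.
apply/and4P; split=> //.
- apply/eqP=> E; have : a \in [set b; c] by rewrite -E !inE eqxx.
  by rewrite !inE (negbTE ab) (negbTE ac).
apply/and4P; split.
- by apply/existsP; exists [set a; b; c]; rewrite H union3 subxx.
- apply/eqP=> E; have : a \in [set b; c] :|: [set c; d] by rewrite -E !inE eqxx.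
  by rewrite !inE (negbTE ab) (negbTE ac) (eq_sym a d) (negbTE da).
- suff -> : ([set a; b] :|: [set b; c]) :&: ([set b; c] :|: [set c; d]) = [set b; c] by [].
  apply/setP=> u; rewrite !inE; case: (eqVneq u b) => [->|ub]; first by rewrite ?eqxx ?orbT ?orTb ?andbT.
  case: (eqVneq u c) => [->|uc]; first by rewrite ?eqxx ?orbT ?andbT.
  rewrite /= !orbF; case: (eqVneq u a) => [->|] //=.
  by rewrite eq_sym (negbTE da).
- rewrite disjoint_subset; apply/subsetP=> u; rewrite !inE => /orP [] /eqP ->; rewrite negb_or.
  + by rewrite ac eq_sym da.
  + by rewrite bc eq_sym db.
Qed.

Lemma zzc_valid a b c d : zzc a b c d -> valid (a, b, c).
Proof.
case/and4P=> E1 E2 N /and4P [/existsP [f /andP [fT sf]] _ _ _].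
have ab := edge_neq E1; have bc := edge_neq E2.
have ac : a != c.
  apply/eqP=> E; subst c; move/eqP: N; apply.
  by apply/setP=> u; rewrite !inE orbC.
rewrite union3 in sf.
have af : a \in f by apply: (subsetP sf); rewrite !inE eqxx.
have bf : b \in f by apply: (subsetP sf); rewrite !inE eqxx ?orbT.
have cf : c \in f by apply: (subsetP sf); rewrite !inE eqxx ?orbT.
rewrite /valid -(face3 (H3 fT) af bf cf ab bc ac).
by rewrite fT ab bc ac.
Qed.

Lemma zzc_to a b c d e : zzc a b c d -> zzc b c d e -> valid (a, b, c) /\ d = nw a b c.
Proof.
move=> Z1 Z2; have V1 := zzc_valid Z1; have V2 := zzc_valid Z2.
split=> //; apply: esym; apply: nw_eq => //.
case/and4P: V2 => H bc cd bd.
have da : d != a.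
  apply/eqP=> E; subst d; case/and4P: Z1 => _ _ _ /and4P [_ N _ _].
  by move/eqP: N; apply; apply/setP=> u; rewrite !inE; case: (u == a); case: (u == b); case: (u == c).
by rewrite /isw H da eq_sym bd eq_sym cd.
Qed.

Definition chain x u := forall i, valid (stt x u i) /\ stt x u i.+1 = next (stt x u i).

Lemma chain_iter x u : chain x u -> forall k, stt x u k = iter k next (stt x u 0).
Proof. by move=> C; elim=> [|k IH] //; rewrite iterS -IH; case: (C k). Qed.

Lemma zz_all x u : 0 < size u -> (forall i : 'I_(size u), zz_local T x u i) ->
  forall i, zzc (cyc x u i) (cyc x u i.+1) (cyc x u i.+2) (cyc x u i.+3).
Proof.
move=> H A i; have := A (Ordinal (ltn_pmod i H)); rewrite zz_localE /=.
have E : forall m, cyc x u ((i %% size u) + m) = cyc x u (i + m).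
  by move=> m; apply: cyc_mod; rewrite modnDml.
have E0 := E 0; have E1 := E 1; have E2 := E 2; have E4 := E 3.
rewrite ?addn0 ?addn1 ?addn2 ?addn3 in E0 E1 E2 E4.
by rewrite E0 E1 E2 E4.
Qed.

Lemma zig_chain u x : is_zigzag T u -> chain x u.
Proof.
case: u => [|y u'] // /andP [/forallP A _].
set u := y :: u'.
have H : 0 < size u by [].
have Z := zz_all H A.
have D : forall k, cyc x u k = cyc y u k by move=> k; apply: cyc_def.
move=> i; rewrite /stt !D.
have [V E] := zzc_to (Z i) (Z i.+1).
split=> //; by rewrite next_val // E.
Qed.

Lemma chain_vs x u : 0 < size u -> chain x u ->
  (forall k, 0 < k < size u -> rot k u != u) -> u = vs (stt x u 0).
Proof.
move=> H C R.
set y := stt x u 0; set n := size u.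
have it := chain_iter C.
have cy : forall k, cyc x u k = (iter k next y).1.1 by move=> k; rewrite -it.
have Hn : iter n next y = y.
  rewrite -it /stt; congr (_, _, _); apply: cyc_mod; rewrite -/n.
  - by rewrite modnn mod0n.
  - by rewrite -(addn1 n) modnDl.
  - by rewrite -(addn2 n) modnDl.
have o0 := order_gt0 next y.
have Ho : order next y = n.
  apply/eqP; rewrite eqn_leq; apply/andP; split.
    rewrite leqNgt; apply/negP=> L.
    have := findex_iter L; rewrite Hn findex0 => E.
    by move: H; rewrite -/n -E.
  rewrite leqNgt; apply/negP=> L.
  have : rot (order next y) u == u.
    apply/eqP; apply: (@eq_from_nth _ x); first by rewrite size_rot.
    move=> i; rewrite size_rot => Hi.
    rewrite -!cyc_small ?size_rot // cyc_rot; last by apply: ltnW.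
    by rewrite !cy iterD (iter_order next_inj).
  by apply/negP; apply: R; rewrite o0.
apply: (@eq_from_nth _ x); first by rewrite size_vs Ho.
move=> i Hi; rewrite -cyc_small // -[nth x (vs y) i]cyc_small ?size_vs ?Ho //.
by rewrite cy cyc_vs.
Qed.

Lemma vs_zig r : valid r -> is_zigzag T (vs r).
Proof.
move=> V; have S := size_vs r; have o0 := order_gt0 next r.
case E: (vs r) => [|y u']; first by move: S; rewrite E => S; rewrite -S in o0.
have Sz : size (vs r) = (size u').+1 by rewrite E.
rewrite /is_zigzag /= -E; apply/andP; split.
- apply/forallP=> i; rewrite zz_localE.
  have E1 := stt_vs y i V; have E2 := stt_vs y i.+1 V; rewrite iterS in E2.
  move: E1 E2; rewrite /stt.
  case: (iter i next r) (valid_iter i V) => [[a b] c] Vs.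
  rewrite next_val //; case=> -> -> -> /(congr1 (fun s : st => s.2)) /= ->.
  exact: zzc_of.
- apply/forallP=> k; apply/implyP=> k0; apply/eqP=> Er.
  have Hk : k <= size (vs r) by rewrite Sz; apply: ltnW.
  have := stt_rot y Hk; rewrite Er !stt_vs // => Ek.
  have Lk : k < order next r by rewrite -S Sz.
  have := findex_iter Lk; rewrite -Ek findex0 => Ek0.
  by move: k0; rewrite -Ek0.
Qed.

Lemma zig_vs u x : is_zigzag T u -> valid (stt x u 0) /\ u = vs (stt x u 0).
Proof.
move=> Z; have C := zig_chain x Z; split; first by case: (C 0).
apply: chain_vs => //; first by case: u Z {C}.
case: u Z {C} => [|y u'] // /andP [_ /forallP R] k /andP [k0 kn].
by have := R (Ordinal kn); rewrite /= k0.
Qed.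

Lemma cyc_rev (x : W) (u : seq W) m i : size u = m.+1 -> cyc x (rev u) i = cyc x u (m * i.+1).
Proof.
move=> Hs; rewrite /cyc size_rev Hs nth_rev; last by rewrite Hs ltn_pmod.
rewrite Hs subSS.
have jm : i %% m.+1 <= m by rewrite -ltnS ltn_pmod.
have E : m * i.+1 = (i - i %/ m.+1) * m.+1 + (m - i %% m.+1).
  have D := divn_eq i m.+1.
  move: jm D; set q := i %/ m.+1; set j := i %% m.+1 => jm D.
  rewrite D; clearbody q j.
  rewrite (_ : q * m.+1 + j - q = q * m + j); last by rewrite mulnS; lia.
  rewrite -addnS mulnDr mulnDl !mulnS; lia.
by rewrite E modnMDl (@modn_small (m - i %% m.+1)) // ltnS leq_subr.
Qed.

Lemma zig_rev u : is_zigzag T u -> is_zigzag T (rev u).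
Proof.
move=> Z; case: u Z => [|y u'] // Z.
set u := y :: u' in Z *; set m := size u'.
have Hs : size u = m.+1 by [].
have C := zig_chain y Z.
have CM : forall a b c, a = b + c * m.+1 -> cyc y u a = cyc y u b.
  by move=> a b c ->; apply: cyc_mod; rewrite Hs addnC modnMDl.
have S : forall i, stt y (rev u) i = rv (stt y u (m * i.+3)).
  move=> i; rewrite /stt rvE !(cyc_rev _ _ Hs); congr (_, _, _).
  - by apply: esym; apply: (CM _ _ 2); lia.
  - by apply: esym; apply: (CM _ _ 1); lia.
have C' : chain y (rev u).
  move=> i; rewrite !S; split; first by apply: valid_rv; case: (C (m * i.+3)).
  have E : stt y u (m * i.+3) = stt y u (m * i.+4).+1.
    rewrite /stt; congr (_, _, _); apply: esym; apply: (CM _ _ 1); lia.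
  case: (C (m * i.+4)) => V N; by rewrite E N next_rv.
have -> : rev u = vs (stt y (rev u) 0).
  apply: chain_vs => //; first by rewrite size_rev.
  move=> k /andP [k0 kn]; apply/negP=> /eqP Er.
  have : rotr k u = u by rewrite -[rotr k u]revK rev_rotr Er revK.
  rewrite /rotr => Er'.
  case/andP: Z => _ /forallP R.
  have L : size u - k < size u by rewrite size_rev in kn; lia.
  by have := R (Ordinal L); rewrite /= Er' eqxx implybF; rewrite size_rev in kn; lia.
by apply: vs_zig; case: (C' 0).
Qed.

Lemma order_gt1 r : valid r -> 1 < order next r.
Proof.
move=> V; have o0 := order_gt0 next r; rewrite ltn_neqAle o0 andbT eq_sym.
apply/eqP=> o1; have := iter_order next_inj r; rewrite o1 /=.
clear o0 o1; case: r V => [[a b] c] V; rewrite next_val // => -[E _ _].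
by case/and4P: V => _; rewrite E eqxx.
Qed.

Lemma fsym : connect_sym (frel next).
Proof. exact: fconnect_sym next_inj. Qed.

Lemma order_iter r j : order next (iter j next r) = order next r.
Proof.
rewrite /order; apply: eq_card => y.
have C : fconnect next r (iter j next r) by apply: fconnect_iter.
apply/idP/idP => H; first by apply: connect_trans C H.
by apply: connect_trans H; rewrite fsym.
Qed.

Lemma vs_iter r j : valid r -> j < order next r -> vs (iter j next r) = rot j (vs r).
Proof.
move=> V jo; apply: (@eq_from_nth _ r.1.1); first by rewrite size_rot !size_vs order_iter.
move=> i; rewrite size_vs order_iter => io.
rewrite -cyc_small ?size_vs ?order_iter // -cyc_small ?size_rot ?size_vs //.
by rewrite cyc_rot ?size_vs ?(ltnW jo) // !cyc_vs iterD.
Qed.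

Lemma ceq_vs x u r : valid r -> ceq u (vs r) -> exists k, k < size u /\ stt x u k = r.
Proof.
move=> V /hasP [k]; rewrite mem_iota add0n => /andP [_ ku] /eqP E.
exists k; split=> //; by rewrite -stt_rot ?(ltnW ku) // E stt_vs.
Qed.

Section Orient.
Variable d : W -> W -> bool.
Hypothesis Hd1 : forall x y z, valid (x, y, z) -> d x y != d y x.
Hypothesis Hd2 : forall x y z, valid (x, y, z) -> d x y -> d y z.

Lemma d_cyc x y z : valid (x, y, z) -> d x y = d y z.
Proof.
move=> V; apply/idP/idP; first exact: Hd2 V.
move=> H; have V1 := valid_rot V; have V2 := valid_rot V1.
exact: (Hd2 V2 (Hd2 V1 H)).
Qed.

Definition good (s : st) := d s.1.1 s.1.2.

Lemma good_next s : valid s -> good (next s) = good s.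
Proof. by case: s => [[x y] z] V; rewrite next_val // /good /= (d_cyc V). Qed.

Lemma good_iter k s : valid s -> good (iter k next s) = good s.
Proof.
move=> V; elim: k => [|k IH] //; by rewrite iterS good_next ?IH //; apply: valid_iter.
Qed.

Definition Rset := [pred r : st | [&& valid r, good r & froots next r]].
Definition tauo := [seq vs r | r <- enum Rset].

Lemma conn_iter r s : fconnect next r s -> exists2 k, k < order next r & s = iter k next r.
Proof. move=> C; exists (findex next r s); [exact: findex_max | by rewrite iter_findex]. Qed.

Lemma root_in s : valid s -> good s -> froot next s \in Rset.
Proof.
move=> V G; have [k _ E] := conn_iter (connect_root (frel next) s).
rewrite inE /=; apply/and3P; split.
- by rewrite E valid_iter.
- by rewrite E good_iter.
- exact: (roots_root fsym).
Qed.

Lemma zig_in_tau x u : is_zigzag T u -> has (ceq u) tauo = good (stt x u 0).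
Proof.
move=> Z; have [V E] := zig_vs x Z; set y := stt x u 0 in V E *.
have Su : 0 < size u by case: u Z {V E y}.
apply/hasP/idP.
- case=> t /mapP [r]; rewrite mem_enum => /and3P [Vr gr _] -> Hc.
  have [k [ku Ek]] := ceq_vs x Vr Hc.
  by rewrite -(good_iter k V) -(chain_iter (zig_chain x Z)) Ek.
- move=> gy; set r := froot next y.
  have Rr := root_in V gy.
  exists (vs r); first by apply: map_f; rewrite mem_enum.
  have Vr : valid r by case/and3P: Rr.
  have C : fconnect next r y by rewrite fsym; apply: connect_root.
  have [j jo Ej] := conn_iter C.
  have Eu : u = rot j (vs r) by rewrite E Ej vs_iter.
  have Sz : size u = order next r by rewrite Eu size_rot size_vs.
  apply/hasP; case: (posnP j) => [j0|jpos].
    by exists 0; [rewrite mem_iota | rewrite rot0 Eu j0 rot0].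
  exists (size u - j); first by rewrite mem_iota add0n; apply/andP; split=> //; lia.
  have Hr : rotr j u = vs r by rewrite Eu rotK.
  by rewrite -Hr.
Qed.

Lemma tauo_xor u : is_zigzag T u -> has (ceq u) tauo (+) has (ceq (rev u)) tauo.
Proof.
move=> Z; case: u Z => [|x u'] // Z; set u := x :: u' in Z *; set m := size u'.
have Hs : size u = m.+1 by [].
rewrite (zig_in_tau x Z) (zig_in_tau x (zig_rev Z)).
have C := zig_chain x Z.
have G : good (stt x u 0) = good (stt x u (m * 2)).
  by rewrite (chain_iter C (m * 2)) good_iter //; case: (C 0).
have [V _] := C (m * 2).
have E1 : cyc x u (m * 2).+1 = cyc x u (m * 1).
  by apply: cyc_mod; rewrite Hs (_ : (m * 2).+1 = 1 * m.+1 + m * 1) ?modnMDl //; lia.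
rewrite G /good /stt /= !(cyc_rev _ _ Hs) -E1.
move: (Hd1 V); rewrite /stt.
by case: (d _ _); case: (d _ _).
Qed.

Lemma tauo_all : all (is_zigzag T) tauo.
Proof. by apply/allP=> t /mapP [r]; rewrite mem_enum => /and3P [V _ _] ->; apply: vs_zig. Qed.

Lemma tauo_uniq i j : i < size tauo -> j < size tauo -> i != j ->
  ~~ ceq (nth [::] tauo i) (nth [::] tauo j).
Proof.
rewrite size_map => Hi Hj ij.
have [r0 _] : exists r0 : st, True by case: (enum Rset) Hi => [|r0 _] //; exists r0.
rewrite !(nth_map r0) //.
set ri := nth r0 (enum Rset) i; set rj := nth r0 (enum Rset) j.
have Ri : ri \in Rset by rewrite -mem_enum mem_nth.
have Rj : rj \in Rset by rewrite -mem_enum mem_nth.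
case/and3P: Ri => Vi _ Roi; case/and3P: Rj => Vj _ Roj.
apply/negP=> Hc; have [k [_ Ek]] := ceq_vs r0.1.1 Vj Hc.
rewrite stt_vs // in Ek.
have Cij : fconnect next ri rj by rewrite -Ek; apply: fconnect_iter.
have Eij : ri = rj.
  move/eqP: Roi => <-; move/eqP: Roj => <-; exact/(rootP fsym).
move: ij; rewrite -(nth_uniq r0 Hi Hj (enum_uniq _)) -/ri -/rj Eij.
by rewrite eqxx.
Qed.

Lemma zip_vs r : valid r -> zip (vs r) (rot 1 (vs r)) = map (fun s : st => s.1) (orbit next r).
Proof.
move=> V; have o1 := order_gt1 V.
apply: (@eq_from_nth _ (r.1.1, r.1.1)).
  by rewrite size_zip size_rot minnn size_map size_vs size_orbit.
move=> i; rewrite size_zip size_rot minnn size_vs => io.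
rewrite nth_zip ?size_rot // (nth_map r) ?size_orbit // /orbit nth_traject //.
rewrite -cyc_small ?size_vs // -cyc_small ?size_rot ?size_vs // cyc_rot ?size_vs ?(ltnW o1) //.
rewrite !cyc_vs addn1 iterS.
case: (next_fst (valid_iter i V)) => -> _.
by case: (iter i next r) => [[]].
Qed.

Lemma count_orbit (P : pred st) r : count P (orbit next r) = \sum_(s : st) ((s \in orbit next r) && P s).
Proof.
rewrite -sum1_count big_mkcond /= big_uniq ?orbit_uniq // big_mkcond /=.
by apply: eq_bigr => s _; case: (s \in _); case: (P s).
Qed.

Lemma trav_tauo u v : trav tauo u v = #|[set s | valid s && good s && (s.1 == (u, v))]|.
Proof.
rewrite /trav big_map big_enum /=.
under eq_bigr => r Rr do
  rewrite zip_vs ?(andP Rr).1 // count_map count_orbit.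
rewrite exchange_big /= -sum1_card [in RHS]big_mkcond /=.
apply: eq_bigr => s _; rewrite inE.
case G: (valid s && good s).
- case/andP: G => Vs Gs.
  rewrite (bigD1 (froot next s)) ?root_in //=.
  rewrite big1 ?addn0.
    rewrite -fconnect_orbit fsym (connect_root (frel next) s) /=.
    by case: (_ == _).
  move=> r /andP [Rr N]; case Hs: (s \in orbit next r) => //=.
  move: N; rewrite -fconnect_orbit in Hs.
  case/and3P: Rr => _ _ /eqP <-.
  by rewrite (rootP fsym Hs) eqxx.
- rewrite big1 //= => r Rr; case Hs: (s \in orbit next r) => //=.
  case/and3P: Rr => Vr Gr _; move: Hs G; rewrite -fconnect_orbit => /conn_iter [k _ ->].
  by rewrite valid_iter // good_iter // Gr.
Qed.

Lemma card_faces u v w : valid (u, v, w) -> #|[set z | valid (u, v, z)]| = 2.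
Proof.
move=> V; have E := H2 (edge_of (valid_rot (valid_rot V))).
rewrite -E -(@card_in_imset _ _ (fun z => [set u; v; z])).
  apply: eq_card => f; rewrite [in RHS]inE; apply/imsetP/andP.
  - case=> z; rewrite inE => /and4P [Hz uv vz uz] ->; split=> //.
    by apply/subsetP=> a; rewrite !inE => /orP [] ->; rewrite ?orbT.
  - case=> fT sf; case/and4P: V => _ uv _ _.
    have uf : u \in f by apply: (subsetP sf); rewrite !inE eqxx.
    have vf : v \in f by apply: (subsetP sf); rewrite !inE eqxx orbT.
    have [z [zf zu zv Ef]] := third (H3 fT) uf vf uv.
    exists z => //; rewrite inE /valid -Ef fT uv eq_sym zv eq_sym zu.
    by [].
move=> z1 z2; rewrite !inE => /and4P [_ _ vz1 uz1] /and4P [_ _ _ _] E12.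
have : z1 \in [set u; v; z2] by rewrite -E12 !inE eqxx orbT.
by rewrite in3 eq_sym (negbTE uz1) eq_sym (negbTE vz1) /= => /eqP.
Qed.

Lemma trav_val u v w : valid (u, v, w) -> trav tauo u v = if d u v then 2 else 0.
Proof.
move=> V; rewrite trav_tauo.
case Hd: (d u v).
- have -> : [set s | valid s && good s && (s.1 == (u, v))] = (fun z => (u, v, z)) @: [set z | valid (u, v, z)].
    apply/setP=> s; rewrite inE; apply/andP/imsetP.
    + case=> /andP [Vs _] /eqP E; exists s.2; last by case: s Vs E => [[a b] c] /= _ [-> ->].
      by rewrite inE; case: s Vs E => [[a b] c] /= Vs [<- <-].
    + case=> z; rewrite inE => Vz ->; by rewrite Vz /good /= Hd eqxx.
  rewrite card_imset; first exact: card_faces V.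
  by move=> z1 z2 [].
- apply/eqP; rewrite cards_eq0; apply/eqP/setP=> s; rewrite !inE.
  apply/negbTE; apply/negP=> /andP [/andP [_ Gs] /eqP E].
  by move: Gs; rewrite /good E Hd.
Qed.

Lemma tauo_typeII : all_faces_typeII T tauo.
Proof.
move=> f fT u v uf vf uv.
have [w [wf wu wv Ef]] := third (H3 fT) uf vf uv.
have V1 : valid (u, v, w) by rewrite /valid -Ef fT uv eq_sym wv eq_sym wu.
have V2 : valid (v, u, w) by rewrite /valid -set3A -Ef fT eq_sym uv eq_sym wu eq_sym wv.
rewrite /edge_typeII (trav_val V1) (trav_val V2).
by move: (Hd1 V1); case: (d u v); case: (d v u).
Qed.

Lemma tauo_zor : z_orientation T tauo.
Proof. split; [exact: tauo_all | exact: tauo_uniq | exact: tauo_xor]. Qed.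

End Orient.

Section FromTau.
Variable tau : seq (seq W).
Hypothesis Hz : z_orientation T tau.
Hypothesis Ht : all_faces_typeII T tau.
Definition dtau a b := trav tau a b == 2.

Lemma etII x y z : valid (x, y, z) -> edge_typeII tau x y.
Proof. case/and4P=> H xy _ _; apply: (Ht H) => //; by rewrite !inE eqxx ?orbT. Qed.

Lemma dtau1 x y z : valid (x, y, z) -> dtau x y != dtau y x.
Proof. by move/etII; rewrite /edge_typeII /dtau; case/orP=> /andP [/eqP -> /eqP ->]. Qed.

Lemma trav_in t a b : t \in tau -> (a, b) \in zip t (rot 1 t) -> 0 < trav tau a b.
Proof.
move=> tin ab; rewrite /trav (big_rem t tin) /=.
apply: leq_trans (leq_addr _ _); rewrite -has_count; apply/hasP; exists (a, b) => //=.
Qed.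

Lemma pos_d x y z : valid (x, y, z) -> 0 < trav tau x y -> dtau x y.
Proof. by move/etII; rewrite /edge_typeII /dtau; case/orP=> /andP [/eqP -> _]. Qed.

Lemma dtau2 x y z : valid (x, y, z) -> dtau x y -> dtau y z.
Proof.
move=> V Dxy; set r := (x, y, z); set s := vs r.
have Z : is_zigzag T s by apply: vs_zig.
have o1 := order_gt1 V.
have Ss : size s = order next r by rewrite size_vs.
have S0 := stt_vs x 0 V; rewrite /stt /= -/s in S0.
case: S0 => C0 C1 C2.
set n := size s in Ss *.
have n1 : 1 < n by rewrite Ss.
case: Hz => _ _ /(_ s Z); case Hs: (has (ceq s) tau) => /= H.
- case/hasP: Hs => t tin /hasP [k]; rewrite mem_iota add0n => /andP [_ ks] /eqP Et.
  apply: (pos_d (valid_rot V)); apply: (trav_in tin).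
  have tpos : 0 < size t by rewrite -Et size_rot -/n; lia.
  have := cyc_pair x (1 + (n - k)) tpos.
  rewrite -Et !cyc_rot ?(ltnW ks) //.
  have E1 : 1 + (n - k) + k = 1 + 1 * n by lia.
  have E2 : (1 + (n - k)).+1 + k = 2 + 1 * n by lia.
  rewrite E1 E2 (@cyc_mod _ _ _ (1 + 1 * n) 1) ?(@cyc_mod _ _ _ (2 + 1 * n) 2) //.
  + by rewrite C1 C2.
  + by rewrite -/n addnC modnMDl.
  + by rewrite -/n addnC modnMDl.
- case/hasP: H => t tin /hasP [k]; rewrite mem_iota add0n size_rev -/n => /andP [_ ks] /eqP Et.
  have V' : valid (y, x, z) by case/and4P: V => H1 xy yz xz; rewrite /valid -set3A H1 eq_sym xy xz yz.
  have Dyx : dtau y x.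
    apply: (pos_d V'); apply: (trav_in tin).
    have tpos : 0 < size t by rewrite -Et size_rot size_rev -/n; lia.
    have := cyc_pair x ((n.-2) + (n - k)) tpos.
    rewrite -Et !cyc_rot ?size_rev ?(ltnW ks) //.
    have E1 : n.-2 + (n - k) + k = n.-2 + 1 * n by lia.
    have E2 : (n.-2 + (n - k)).+1 + k = n.-1 + 1 * n by lia.
    rewrite E1 E2 (@cyc_mod _ _ _ (n.-2 + 1 * n) n.-2); last by rewrite size_rev -/n addnC modnMDl.
    rewrite (@cyc_mod _ _ _ (n.-1 + 1 * n) n.-1); last by rewrite size_rev -/n addnC modnMDl.
    rewrite !cyc_small ?size_rev -/n; try lia.
    rewrite !nth_rev -/n; try lia.
    rewrite (_ : n - n.-2.+1 = 1); last by lia.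
    rewrite (_ : n - n.-1.+1 = 0); last by lia.
    by rewrite -!cyc_small -/n ?C0 ?C1 //; lia.
  by move: (dtau1 V); rewrite Dxy Dyx.
Qed.

End FromTau.

End Zig.


Section Pre.
Variables (A B : finType) (h : A -> B).
Hypothesis hinj : injective h.

Lemma subimset (e : {set B}) (f : {set A}) :
  (e \subset h @: f) = (e \subset h @: setT) && (h @^-1: e \subset f).
Proof.
apply/idP/andP.
- move=> sf; split.
  + apply: (subset_trans sf); apply: imsetS; exact: subsetT.
  + apply/subsetP=> x; rewrite inE => xe.
    by case/imsetP: (subsetP sf _ xe) => y yf /hinj ->.
- case=> sT sp; apply/subsetP=> p pe.
  case/imsetP: (subsetP sT _ pe) => x _ Ex; subst p.
  by apply: imset_f; apply: (subsetP sp); rewrite inE.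
Qed.

Lemma card_pre (e : {set B}) : e \subset h @: setT -> #|h @^-1: e| = #|e|.
Proof.
move=> sT; rewrite -(card_imset _ hinj); apply: eq_card => p.
apply/imsetP/idP.
- by case=> x; rewrite inE => xe ->.
- move=> pe; case/imsetP: (subsetP sT _ pe) => x _ Ex; exists x => //.
  by rewrite inE -Ex.
Qed.

End Pre.

Lemma cardD_F (V : finType) (T : {set {set V}}) (F e : {set V}) : F \in T ->
  #|[set f in T :\ F | e \subset f]| = #|[set f in T | e \subset f]| - (e \subset F).
Proof.
move=> FT; rewrite (cardsD1 F [set f in T | e \subset f]) inE FT /=.
rewrite addKn; apply: eq_card => f; rewrite !inE.
by case: (f == F); rewrite ?andbF.
Qed.

Section Csum.
Variables (V V' : finType) (T : {set {set V}}) (T' : {set {set V'}}).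
Variables (F : {set V}) (F' : {set V'}) (g : V -> V').
Hypothesis H3 : forall f, f \in T -> #|f| = 3.
Hypothesis H2 : forall e, is_edge T e -> #|[set f in T | e \subset f]| = 2.
Hypothesis H3' : forall f, f \in T' -> #|f| = 3.
Hypothesis H2' : forall e, is_edge T' e -> #|[set f in T' | e \subset f]| = 2.
Hypothesis FT : F \in T.
Hypothesis FT' : F' \in T'.
Hypothesis gF : g @: F = F'.

Local Notation W := (V + V')%type.
Local Notation phi := (csum_vtx F g).
Local Notation T2 := (csum T T' F F' g).

Lemma ginj : {in F &, injective g}.
Proof. by apply/imset_injP; rewrite gF H3' // H3. Qed.

Lemma inrI : injective (@inr V V'). Proof. by move=> x y []. Qed.

Lemma phi_inj : injective phi.
Proof.
move=> a b; rewrite /csum_vtx; case: ifP => aF; case: ifP => bF // [] E //.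
exact: ginj.
Qed.

Lemma phiF a b' : phi a = inr b' -> a \in F /\ b' = g a.
Proof. by rewrite /csum_vtx; case: ifP => // aF []. Qed.

Lemma phiFE a : a \in F -> phi a = inr (g a).
Proof. by rewrite /csum_vtx => ->. Qed.

Lemma T2P h : h \in T2 ->
  (exists2 f, f \in T :\ F & h = phi @: f) \/ (exists2 f', f' \in T' :\ F' & h = inr @: f').
Proof. by rewrite /csum inE => /orP [] /imsetP [f fin ->]; [left | right]; exists f. Qed.

Lemma H3_2 h : h \in T2 -> #|h| = 3.
Proof.
case/T2P=> [[f fin ->]|[f fin ->]]; rewrite card_imset ?H3 ?H3' //;
  try (by case/setD1P: fin); [exact: phi_inj | exact: inrI].
Qed.

Lemma AB_disj (f : {set V}) (f' : {set V'}) : f \in T :\ F -> phi @: f != inr @: f'.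
Proof.
case/setD1P=> fF fT; apply/eqP=> E.
have sf : f \subset F.
  apply/subsetP=> a af; have : phi a \in inr @: f' by rewrite -E imset_f.
  by case/imsetP=> b' _ /phiF [].
move/eqP: fF; apply; apply/eqP; rewrite eqEcard sf H3 // H3 //.
Qed.

Lemma H2_2 e : is_edge T2 e -> #|[set h in T2 | e \subset h]| = 2.
Proof.
case/andP=> /eqP e2 /existsP [h0 /andP [h0T se0]].
set SA := [set f in T :\ F | e \subset phi @: f].
set SB := [set f' in T' :\ F' | e \subset inr @: f'].
have ES : [set h in T2 | e \subset h] = (fun f : {set V} => phi @: f) @: SA :|: (fun f : {set V'} => (@inr V V') @: f) @: SB.
  apply/setP=> h; rewrite !inE /csum ?inE; apply/andP/orP.
  - case=> /orP [] /imsetP [f fin ->] se; [left | right]; apply/imsetP; exists f => //;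
      by rewrite inE fin se.
  - case=> /imsetP [f]; rewrite inE => /andP [fin se] ->; split => //; apply/orP;
      [left | right]; by apply/imsetP; exists f.
have cardE : #|[set h in T2 | e \subset h]| = #|SA| + #|SB|.
  rewrite ES cardsU (card_imset _ (imset_inj phi_inj)) (card_imset _ (imset_inj inrI)).
  suff -> : ((fun f : {set V} => phi @: f) @: SA :&: (fun f : {set V'} => (@inr V V') @: f) @: SB) = set0 by rewrite cards0 subn0.
  apply/setP=> h; rewrite !inE; apply/negbTE/negP=> /andP [/imsetP [f fA ->] /imsetP [f' _ E]].
  rewrite inE in fA; case/andP: fA => fin _.
  by move/eqP: (AB_disj f' fin).
rewrite cardE.
set rphi := phi @: [set: V]; set rinr := (@inr V V') @: [set: V'].
have SAe : SA = [set f in T :\ F | (e \subset rphi) && (phi @^-1: e \subset f)].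
  by apply/setP=> f; rewrite !inE subimset //; exact: phi_inj.
have SBe : SB = [set f in T' :\ F' | (e \subset rinr) && (inr @^-1: e \subset f)].
  by apply/setP=> f; rewrite !inE subimset //; exact: inrI.
set ea := phi @^-1: e; set eb := (@inr V V') @^-1: e.
have subr : forall (A : finType) (k : A -> W) (f : {set A}), k @: f \subset k @: [set: A].
  by move=> A k f; apply: imsetS; apply: subsetT.
case: (boolP (e \subset rinr)) => erinr; last first.
  have -> : #|SB| = 0.
    apply/eqP; rewrite cards_eq0 SBe; apply/eqP/setP=> f; rewrite !inE (negbTE erinr) andbF.
    by [].
  have [f0 f0in ef0] : exists2 f0, f0 \in T :\ F & e \subset phi @: f0.
    case/T2P: h0T => [[f0 f0in E0]|[f0 _ E0]]; first by exists f0; rewrite // -E0.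
    by move: erinr; rewrite (subset_trans se0) // E0 subr.
  rewrite subimset in ef0; last exact: phi_inj.
  case/andP: ef0 => erphi eaf0.
  have ea2 : #|ea| = 2 by rewrite card_pre //; exact: phi_inj.
  have eaE : is_edge T ea.
    rewrite /is_edge ea2 eqxx /=; apply/existsP; exists f0; case/setD1P: f0in => _ ->.
    by [].
  have eaF : ~~ (ea \subset F).
    case/subsetPn: erinr => p pe pr.
    case/imsetP: (subsetP erphi _ pe) => a _ Ea.
    apply/subsetPn; exists a; first by rewrite inE -Ea.
    apply/negP=> aF; move: pr; rewrite Ea phiFE //.
    by rewrite /rinr imset_f ?inE.
  rewrite addn0 SAe.
  have -> : [set f in T :\ F | (e \subset rphi) && (ea \subset f)] = [set f in T :\ F | ea \subset f].
    by apply/setP=> f; rewrite !inE erphi.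
  by rewrite cardD_F // H2 // (negbTE eaF).
have eb2 : #|eb| = 2 by rewrite card_pre //; exact: inrI.
have SBe' : SB = [set f in T' :\ F' | eb \subset f].
  by rewrite SBe; apply/setP=> f; rewrite !inE erinr.
case: (boolP (eb \subset F')) => ebF.
-
  have erphi : e \subset rphi.
    apply/subsetP=> p pe; case/imsetP: (subsetP erinr _ pe) => b' _ Eb.
    have : b' \in F' by apply: (subsetP ebF); rewrite inE -Eb.
    rewrite -gF => /imsetP [a aF Ea].
    by rewrite Eb Ea -phiFE // imset_f ?inE.
  have ea2 : #|ea| = 2 by rewrite card_pre //; exact: phi_inj.
  have eaF : ea \subset F.
    apply/subsetP=> a; rewrite inE => ae.
    case/imsetP: (subsetP erinr _ ae) => b' _ /phiF [] //.
  have SAe' : SA = [set f in T :\ F | ea \subset f].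
    by rewrite SAe; apply/setP=> f; rewrite !inE erphi.
  have eaE : is_edge T ea by rewrite /is_edge ea2 eqxx /=; apply/existsP; exists F; rewrite FT.
  have ebE : is_edge T' eb by rewrite /is_edge eb2 eqxx /=; apply/existsP; exists F'; rewrite FT'.
  by rewrite SAe' SBe' !cardD_F // H2 // H2' // eaF ebF.
-
  have erphi : ~~ (e \subset rphi).
    apply/negP=> erphi; move/negP: ebF; apply.
    apply/subsetP=> b'; rewrite inE => be.
    case/imsetP: (subsetP erphi _ be) => a _ /esym /phiF [aF ->].
    by rewrite -gF imset_f.
  have -> : #|SA| = 0.
    apply/eqP; rewrite cards_eq0 SAe; apply/eqP/setP=> f; rewrite !inE (negbTE erphi) andbF.
    by [].
  have [f0 f0in ef0] : exists2 f0, f0 \in T' :\ F' & e \subset inr @: f0.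
    case/T2P: h0T => [[f0 _ E0]|[f0 f0in E0]]; last by exists f0; rewrite // -E0.
    by move: erphi; rewrite (subset_trans se0) // E0 subr.
  rewrite subimset in ef0; last exact: inrI.
  case/andP: ef0 => _ ebf0.
  have ebE : is_edge T' eb.
    rewrite /is_edge eb2 eqxx /=; apply/existsP; exists f0; case/setD1P: f0in => _ ->.
    by [].
  by rewrite SBe' cardD_F // H2' // (negbTE ebF).
Qed.

End Csum.


Definition tri_ok (X : Type) (D : X -> X -> bool) a b c :=
  [/\ D b c = D a b, D c a = D a b, D b a = ~~ D a b, D c b = ~~ D a b & D a c = ~~ D a b].

Lemma tri_det (X : finType) (D1 D2 : X -> X -> bool) a b c :
  tri_ok D1 a b c -> tri_ok D2 a b c -> D1 a b = D2 a b ->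
  forall x y, x \in [set a; b; c] -> y \in [set a; b; c] -> x != y -> D1 x y = D2 x y.
Proof.
case=> A1 B1 C1 D1' E1; case=> A2 B2 C2 D2' E2 H x y.
rewrite !in3 => /or3P [] /eqP -> /or3P [] /eqP ->; rewrite ?eqxx //;
  by rewrite ?A1 ?B1 ?C1 ?D1' ?E1 ?A2 ?B2 ?C2 ?D2' ?E2 H.
Qed.

Lemma tri_ok_of (W : finType) (T : {set {set W}}) (d : W -> W -> bool)
  (Hd1 : forall x y z, valid T (x, y, z) -> d x y != d y x)
  (Hd2 : forall x y z, valid T (x, y, z) -> d x y -> d y z) a b c :
  valid T (a, b, c) -> tri_ok d a b c.
Proof.
move=> V; have V1 := valid_rot V; have V2 := valid_rot V1.
have e1 := d_cyc Hd2 V; have e2 := d_cyc Hd2 V1.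
have n1 := Hd1 _ _ _ V; have n2 := Hd1 _ _ _ V1; have n3 := Hd1 _ _ _ V2.
split.
- by rewrite e1.
- by rewrite -e2 e1.
- by move: n1; case: (d a b); case: (d b a).
- by move: n2; rewrite -e1; case: (d a b); case: (d c b).
- by move: n3; rewrite -e2 -e1; case: (d a b); case: (d a c).
Qed.

Section Main.
Variables (V V' : finType) (T : {set {set V}}) (T' : {set {set V'}}).
Variables (tau : seq (seq V)) (tau' : seq (seq V')).
Hypothesis HT : triangulation T.
Hypothesis HT' : triangulation T'.
Hypothesis Hz : z_orientation T tau.
Hypothesis Hz' : z_orientation T' tau'.
Hypothesis Ht : all_faces_typeII T tau.
Hypothesis Ht' : all_faces_typeII T' tau'.
Variables (F : {set V}) (F' : {set V'}) (g : V -> V').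
Hypothesis FT : F \in T.
Hypothesis FT' : F' \in T'.
Hypothesis gF : g @: F = F'.

Let H3 : forall f, f \in T -> #|f| = 3. Proof. by case: HT. Qed.
Let H2 : forall e, is_edge T e -> #|[set f in T | e \subset f]| = 2. Proof. by case: HT. Qed.
Let H3' : forall f, f \in T' -> #|f| = 3. Proof. by case: HT'. Qed.
Let H2' : forall e, is_edge T' e -> #|[set f in T' | e \subset f]| = 2. Proof. by case: HT'. Qed.

Local Notation phi := (csum_vtx F g).
Local Notation T2 := (csum T T' F F' g).

Let d := dtau tau.
Let d' := dtau tau'.
Let Hd1 : forall x y z, valid T (x, y, z) -> d x y != d y x := fun x y z V => dtau1 Ht V.
Let Hd2 : forall x y z, valid T (x, y, z) -> d x y -> d y z := fun x y z V => dtau2 H3 H2 Hz Ht V.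
Let Hd1' : forall x y z, valid T' (x, y, z) -> d' x y != d' y x := fun x y z V => dtau1 Ht' V.
Let Hd2' : forall x y z, valid T' (x, y, z) -> d' x y -> d' y z := fun x y z V => dtau2 H3' H2' Hz' Ht' V.

Let gi := ginj H3 H3' FT FT' gF.
Let phii := phi_inj H3 H3' FT FT' gF.

Lemma Ftri : exists a0 b0 c0, valid T (a0, b0, c0) /\ F = [set a0; b0; c0].
Proof.
have : 0 < #|F| by rewrite H3.
case/card_gt0P=> a0 a0F.
have : 0 < #|F :\ a0| by move: (H3 FT); rewrite (cardsD1 a0) a0F add1n => -[->].
case/card_gt0P=> b0 /setD1P [b0a0 b0F].
have a0b0 : a0 != b0 by rewrite eq_sym.
have [c0 [c0F c0a0 c0b0 E]] := third (H3 FT) a0F b0F a0b0.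
exists a0, b0, c0; split=> //.
by rewrite /valid -E FT eq_sym b0a0 eq_sym c0b0 eq_sym c0a0.
Qed.

Section Tri.
Variables a0 b0 c0 : V.
Hypothesis V0 : valid T (a0, b0, c0).
Hypothesis EF : F = [set a0; b0; c0].

Let sg := d' (g a0) (g b0) != d a0 b0.
Let d'' a' b' := if sg then d' b' a' else d' a' b'.

Let Hd1'' x y z : valid T' (x, y, z) -> d'' x y != d'' y x.
Proof. by move=> Vx; rewrite /d''; case: sg; [rewrite eq_sym |]; apply: Hd1' Vx. Qed.

Let Hd2'' x y z : valid T' (x, y, z) -> d'' x y -> d'' y z.
Proof.
move=> Vx; rewrite /d''; case: sg; last by apply: Hd2' Vx.
by rewrite (d_cyc Hd2' (valid_rv Vx)).
Qed.

Let V0' : valid T' (g a0, g b0, g c0).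
Proof.
have aF : a0 \in F by rewrite EF !inE eqxx.
have bF : b0 \in F by rewrite EF !inE eqxx orbT.
have cF : c0 \in F by rewrite EF !inE eqxx orbT.
case/and4P: V0 => _ ab bc ac.
have ne : forall x y, x \in F -> y \in F -> x != y -> g x != g y.
  by move=> x y xF yF; apply: contra => /eqP /(gi xF yF) ->.
rewrite /valid (ne a0 b0) // (ne b0 c0) // (ne a0 c0) // !andbT.
have -> : [set g a0; g b0; g c0] = F' by rewrite -gF EF !imsetU !imset_set1.
by [].
Qed.

Let Hcons a b : a \in F -> b \in F -> a != b -> d'' (g a) (g b) = d a b.
Proof.
move=> aF bF ab.
have t1 : tri_ok (fun x y => d'' (g x) (g y)) a0 b0 c0 by apply: (tri_ok_of Hd1'' Hd2'' V0').
have t2 : tri_ok d a0 b0 c0 by apply: (tri_ok_of Hd1 Hd2 V0).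
apply: (tri_det t1 t2) => //; rewrite -?EF //.
rewrite /d'' /sg; case: (boolP (d' (g a0) (g b0) != d a0 b0)) => [N|/negPn /eqP //].
move: (Hd1' V0') N; by case: (d' (g a0) (g b0)); case: (d' (g b0) (g a0)); case: (d a0 b0).
Qed.

Definition d2 (p q : V + V') :=
  [exists a, exists b, [&& phi a == p, phi b == q & d a b]] ||
  [exists a', exists b', [&& inr a' == p, inr b' == q & d'' a' b']].

Lemma d2_phi a b : a != b -> d2 (phi a) (phi b) = d a b.
Proof.
move=> ab; rewrite /d2; apply/orP/idP.
- case=> /existsP [a1 /existsP [b1 /and3P [/eqP E1 /eqP E2 D]]].
  + by move: D; rewrite (phii E1) (phii E2).
  + move: D; case: (phiF (esym E1)) => aF ->; case: (phiF (esym E2)) => bF ->.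
    by rewrite Hcons.
- move=> D; left; apply/existsP; exists a; apply/existsP; exists b; by rewrite !eqxx D.
Qed.

Lemma d2_inr a b : a != b -> d2 (inr a) (inr b) = d'' a b.
Proof.
move=> ab; rewrite /d2; apply/orP/idP.
- case=> /existsP [a1 /existsP [b1 /and3P [/eqP E1 /eqP E2 D]]].
  + case: (phiF E1) => aF Ea; case: (phiF E2) => bF Eb.
    move: D; rewrite Ea Eb Hcons //; apply: contra ab; rewrite Ea Eb.
    by move/eqP ->.
  + by move: D; case: E1 => ->; case: E2 => ->.
- move=> D; right; apply/existsP; exists a; apply/existsP; exists b; by rewrite !eqxx D.
Qed.

Lemma valid2P p q r : valid T2 (p, q, r) ->
  (exists a b c, [/\ valid T (a, b, c), p = phi a, q = phi b & r = phi c]) \/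
  (exists a b c, [/\ valid T' (a, b, c), p = inr a, q = inr b & r = inr c]).
Proof.
case/and4P=> H pq qr pr.
have pin : p \in [set p; q; r] by rewrite !inE eqxx.
have qin : q \in [set p; q; r] by rewrite !inE eqxx orbT.
have rin : r \in [set p; q; r] by rewrite !inE eqxx orbT.
case/T2P: H => [[f fin E]|[f fin E]]; [left | right];
  rewrite E in pin qin rin; case/setD1P: fin => _ fT.
- case/imsetP: pin => a af Ea; case/imsetP: qin => b bf Eb; case/imsetP: rin => c cf Ec.
  subst p q r; exists a, b, c; split=> //.
  have ab : a != b by apply: contra pq => /eqP ->.
  have bc : b != c by apply: contra qr => /eqP ->.
  have ac : a != c by apply: contra pr => /eqP ->.
  by rewrite /valid -(face3 (H3 fT) af bf cf ab bc ac) fT ab bc ac.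
- case/imsetP: pin => a af Ea; case/imsetP: qin => b bf Eb; case/imsetP: rin => c cf Ec.
  subst p q r; exists a, b, c; split=> //.
  have ab : a != b by apply: contra pq => /eqP ->.
  have bc : b != c by apply: contra qr => /eqP ->.
  have ac : a != c by apply: contra pr => /eqP ->.
  by rewrite /valid -(face3 (H3' fT) af bf cf ab bc ac) fT ab bc ac.
Qed.

Lemma Hd1_2 p q r : valid T2 (p, q, r) -> d2 p q != d2 q p.
Proof.
case/valid2P=> [[a [b [c [Vx -> -> _]]]]|[a [b [c [Vx -> -> _]]]]];
  case/and4P: (Vx) => _ ab _ _.
- have ba : b != a by rewrite eq_sym.
  by rewrite (d2_phi ab) (d2_phi ba); apply: Hd1 Vx.
- have ba : b != a by rewrite eq_sym.
  by rewrite (d2_inr ab) (d2_inr ba); apply: Hd1'' Vx.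
Qed.

Lemma Hd2_2 p q r : valid T2 (p, q, r) -> d2 p q -> d2 q r.
Proof.
case/valid2P=> [[a [b [c [Vx -> -> ->]]]]|[a [b [c [Vx -> -> ->]]]]];
  case/and4P: (Vx) => _ ab bc _.
- by rewrite (d2_phi ab) (d2_phi bc); apply: Hd2 Vx.
- by rewrite (d2_inr ab) (d2_inr bc); apply: Hd2'' Vx.
Qed.

Lemma main_tri : exists tau'' : seq (seq (V + V')),
  z_orientation T2 tau'' /\ all_faces_typeII T2 tau''.
Proof.
have H3_ := H3_2 H3 H3' FT FT' gF.
have H2_ := H2_2 H3 H2 H3' H2' FT FT' gF.
exists (tauo T2 d2); split.
- exact: (tauo_zor H3_ H2_ Hd1_2 Hd2_2).
- exact: (tauo_typeII H3_ H2_ Hd1_2 Hd2_2).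
Qed.

End Tri.

Lemma main_glue : exists tau'' : seq (seq (V + V')),
  z_orientation T2 tau'' /\ all_faces_typeII T2 tau''.
Proof. have [a0 [b0 [c0 [V0 EF]]]] := Ftri; exact: main_tri V0 EF. Qed.

End Main.


Unset Implicit Arguments. Set Strict Implicit.

Theorem lemma2 (V V' : finType) (T : {set {set V}}) (T' : {set {set V'}})
  (tau : seq (seq V)) (tau' : seq (seq V')) :
  triangulation T -> triangulation T' ->
  z_orientation T tau -> z_orientation T' tau' ->
  all_faces_typeII T tau -> all_faces_typeII T' tau' ->
  forall (F : {set V}) (F' : {set V'}) (g : V -> V'),
    F \in T -> F' \in T' -> g @: F = F' ->
    exists tau'' : seq (seq (V + V')),
      z_orientation (csum T T' F F' g) tau'' /\
      all_faces_typeII (csum T T' F F' g) tau''.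
Proof.
move=> HT HT' Hz Hz' Ht Ht' F F' g FT FT' gF.
exact: (main_glue HT HT' Hz Hz' Ht Ht' FT FT' gF).
Qed.
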